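(* Let $p \geqslant 7$ be a prime and let $V$ be a $1$-dimensional vector space over $\mathbb{F}_p$. Let $G = \mathrm{Sym}(V)$, let $H = \mathrm{AGL}(V)$, and let $T$ be the group of diagonal matrices in $\mathrm{GL}(V)$ (here $T = \mathrm{GL}(V)$). Then there exists $x \in G$ such that $H \cap H^x = T$.
   Context: $\mathrm{AGL}(V)$ is the group of invertible affine transformations $\mathbf{v} \mapsto \mathbf{v}g + \mathbf{u}$ ($g \in \mathrm{GL}(V)$, $\mathbf{u} \in V$) of $V$, regarded as a subgroup of $\mathrm{Sym}(V)$. *)

(* Defs.v *)
From mathcomp Require Import all_boot all_order all_algebra all_fingroup.
Set Implicit Arguments. Unset Strict Implicit. Unset Printing Implicit Defensive.
Import GRing.Theory.
Local Open Scope ring_scope.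

(* V = 'rV['F_p]_1, the 1-dimensional row space over F_p; linear maps act
   on the right on row vectors: v |-> v *m g. *)
Notation Vp p := 'rV['F_p]_1.

Definition AGL (p : nat) : {set {perm Vp p}} :=
  [set s : {perm Vp p} | [exists g : 'M['F_p]_1, exists u : Vp p,
      (g \in unitmx) && [forall v : Vp p, s v == v *m g + u]]].

Definition diagT (p : nat) : {set {perm Vp p}} :=
  [set s : {perm Vp p} | [exists g : 'M['F_p]_1,
      [&& is_diag_mx g, g \in unitmx & [forall v : Vp p, s v == v *m g]]]].

(* Main.v *)
Require Import Defs.
From mathcomp Require Import all_boot all_order all_algebra all_fingroup.
From mathcomp Require Import ring.
Set Implicit Arguments. Unset Strict Implicit. Unset Printing Implicit Defensive.
Import GRing.Theory.

Section Aux.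
Local Open Scope ring_scope.

Lemma key (F : fieldType) (a b c : F) : (2:F) != 0 -> (3:F) != 0 ->
  a != 0 -> c != 0 ->
  (forall t, (a * t^-1 + b)^-1 = c * t + b^-1) -> b = 0.
Proof.
move=> h2 h3 a0 c0 H; apply/eqP; apply/negPn/negP => b0.
have H1 (u : F) : u != 0 -> a * u + b != 0 -> - (a * u) + b != 0 -> False.
  move=> u0 e1 e2.
  have E1 := H u^-1; rewrite invrK in E1.
  have E2 := H (- u^-1); rewrite invrN invrK mulrN in E2.
  have F1 : (a * u + b) * (c * u^-1 + b^-1) = 1 by rewrite -E1 mulfV.
  have F2 : (- (a * u) + b) * (c * - u^-1 + b^-1) = 1 by rewrite -E2 mulfV.
  have : 2 * a * c * (u * u^-1) + 2 * (b * b^-1) =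
     (a * u + b) * (c * u^-1 + b^-1) + (- (a * u) + b) * (c * - u^-1 + b^-1)
    by ring.
  rewrite F1 F2 !mulfV // => E.
  have : 2 * a * c = 0.
    have -> : 2 * a * c = (2 * a * c * 1 + 2 * 1) - (1 + 1) by ring.
    by rewrite E subrr.
  by apply/eqP; rewrite !mulf_eq0 (negPf h2) (negPf a0) (negPf c0).
have [e1|e1] := eqVneq (a * 1 + b) 0.
  have hb : b = - a by apply/eqP; rewrite -addr_eq0 addrC -e1 mulr1.
  apply: (H1 2) => //; rewrite hb.
  - by have -> : a * 2 + - a = a by ring.
  - have -> : - (a * 2) + - a = - (a * 3) by ring.
    by rewrite oppr_eq0 mulf_neq0.
have [e2|e2] := eqVneq (- (a * 1) + b) 0.
  have hb : b = a by apply/eqP; rewrite -subr_eq0 addrC -e2 mulr1.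
  apply: (H1 2) => //; rewrite hb.
  - have -> : a * 2 + a = a * 3 by ring.
    by rewrite mulf_neq0.
  - have -> : - (a * 2) + a = - a by ring.
    by rewrite oppr_eq0.
by apply: (H1 1) => //; rewrite oner_eq0.
Qed.

Variable p : nat.
Hypothesis hp : prime p.
Hypothesis hp7 : (7 <= p)%N.
Local Notation F := 'F_p.

Lemma mxE11 (a : F) : (a%:M : 'rV[F]_1) 0 0 = a.
Proof. by rewrite mxE eqxx mulr1n. Qed.

Lemma AGLP (s : {perm 'rV[F]_1}) :
  reflect (exists a b : F, a != 0 /\ forall v, s v 0 0 = a * v 0 0 + b)
          (s \in AGL p).
Proof.
rewrite inE; apply: (iffP existsP).
  case=> g /existsP [u /andP [gu /forallP Hs]].
  exists (g 0 0), (u 0 0); split.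
    by rewrite unitmxE det_mx11 unitfE in gu.
  move=> v; rewrite (eqP (Hs v)) mxE; congr (_ + _).
  by rewrite !mxE big_ord1 mulrC.
case=> a [b [a0 Hs]]; exists a%:M; apply/existsP; exists b%:M.
rewrite unitmxE det_mx11 mxE11 unitfE a0 /=; apply/forallP => v.
apply/eqP; rewrite (mx11_scalar (s v)) Hs mul_mx_scalar.
by apply/matrixP => i j; rewrite !ord1 !mxE eqxx !mulr1n mulrC.
Qed.

Lemma diagTP (s : {perm 'rV[F]_1}) :
  reflect (exists a : F, a != 0 /\ forall v, s v 0 0 = a * v 0 0)
          (s \in diagT p).
Proof.
rewrite inE; apply: (iffP existsP).
  case=> g /and3P [_ gu /forallP Hs].
  exists (g 0 0); split.
    by rewrite unitmxE det_mx11 unitfE in gu.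
  by move=> v; rewrite (eqP (Hs v)) !mxE big_ord1 mulrC.
case=> a [a0 Hs]; exists a%:M.
rewrite mx11_is_diag unitmxE det_mx11 mxE11 unitfE a0 /=; apply/forallP => v.
apply/eqP; rewrite (mx11_scalar (s v)) Hs mul_mx_scalar.
by apply/matrixP => i j; rewrite !ord1 !mxE eqxx !mulr1n mulrC.
Qed.

Definition xfun (v : 'rV[F]_1) : 'rV[F]_1 := map_mx GRing.inv v.
Lemma xfunK : involutive xfun.
Proof. by move=> v; apply/matrixP => i j; rewrite !mxE invrK. Qed.
Definition xperm : {perm 'rV[F]_1} := perm (inv_inj xfunK).
Lemma xpermE v : xperm v 0 0 = (v 0 0)^-1.
Proof. by rewrite permE mxE. Qed.
Lemma xpermV v : (xperm^-1)%g v = xperm v.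
Proof.
have -> : v = xperm (xperm v) by rewrite !permE xfunK.
by rewrite permK !permE !xfunK.
Qed.

Lemma conjE (s : {perm 'rV[F]_1}) v :
  (s ^ xperm^-1)%g v 0 0 = ((s (xperm v)) 0 0)^-1.
Proof. by rewrite /conjg invgK !permM xpermV xpermE. Qed.

Lemma main : exists x : {perm 'rV['F_p]_1}, (AGL p :&: (AGL p :^ x))%g = diagT p.
Proof.
have h2 : (2 : 'F_p) != 0.
  by rewrite -(dvdn_pcharf (pchar_Fp hp)); apply/negP => /(@dvdn_leq _ 2 erefl)/(leq_trans hp7).
have h3 : (3 : 'F_p) != 0.
  by rewrite -(dvdn_pcharf (pchar_Fp hp)); apply/negP => /(@dvdn_leq _ 3 erefl)/(leq_trans hp7).
exists xperm; apply/setP => s; rewrite inE mem_conjg.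
apply/andP/diagTP.
  case=> /AGLP [a [b [a0 Hs]]] /AGLP [c [d [c0 Hc]]].
  have Ht (t : 'F_p) : (a * t^-1 + b)^-1 = c * t + d.
    have := Hc t%:M; rewrite conjE Hs xpermE !mxE11 //.
  have db : d = b^-1 by have := Ht 0; rewrite invr0 mulr0 add0r mulr0 add0r.
  rewrite db in Ht.
  have b0 := key h2 h3 a0 c0 Ht.
  by exists a; split => // v; rewrite Hs b0 addr0.
case=> a [a0 Hs]; split; apply/AGLP.
  by exists a, 0; split => // v; rewrite Hs addr0.
exists a^-1, 0; split; first by rewrite invr_eq0.
move=> v; rewrite conjE Hs xpermE addr0 invfM invrK mulrC //.
Qed.

End Aux.

Theorem lemma3p2 (p : nat) (hp : prime p) (hp7 : 7 <= p) :
  exists x : {perm 'rV['F_p]_1}, (AGL p :&: (AGL p :^ x))%g = diagT p.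
Proof. exact: main hp hp7. Qed.
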